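(* Let $N\ge 0$ be an integer and let $|\psi\rangle=\sum_{n=0}^N a_n|n\rangle$ be a normalized single-mode state ($\sum_n|a_n|^2=1$) supported on Fock states with at most $N$ photons. Then $|\psi\rangle$ has approximate coherent rank at most $N+1$. Explicitly, for a nonzero real parameter $\epsilon$, set $$c_k=\frac{e^{\epsilon^2/2}}{N+1}\sum_{n=0}^N \sqrt{n!}\,\frac{a_n}{\epsilon^n}\,e^{-2\pi i nk/(N+1)},\qquad k=0,\dots,N,$$ and $$|\tilde\psi\rangle=\frac{1}{\sqrt{\mathcal N}}\sum_{k=0}^N c_k\,\big|\epsilon e^{2\pi i k/(N+1)}\big\rangle ,$$ where $\mathcal N$ is the squared norm of $\sum_{k=0}^N c_k|\epsilon e^{2\pi i k/(N+1)}\rangle$ (so that $|\tilde\psi\rangle$ is normalized). Then $\mathcal N=1+O\!\left(\epsilon^{2(N+1)}/(N+1)!\right)$ as $\epsilon\to 0$, and the fidelity satisfies $|\langle\psi|\tilde\psi\rangle|^2=1/\mathcal N$; in particular the fidelity can be made arbitrarily close to $1$ by taking $\epsilon$ small.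
   Context: Single-mode Hilbert space with Fock (number) basis $\{|n\rangle\}_{n\ge0}$. For $\alpha\in\mathbb C$, the coherent state is $|\alpha\rangle=e^{-|\alpha|^2/2}\sum_{n=0}^\infty\frac{\alpha^n}{\sqrt{n!}}|n\rangle$ (Greek letters inside kets denote coherent states, Latin letters Fock states). A state has coherent rank $k$ if it can be written as $\sum_{i=1}^k c_i|\alpha_i^{(1)},\dots,\alpha_i^{(m)}\rangle$, a superposition of $k$ (multi-mode product) coherent states. The approximate coherent rank of a state $|\psi\rangle$ is the smallest integer $k$ such that for every $\delta>0$ there is a state $|\tilde\psi\rangle$ of coherent rank $k$ with $|\langle\psi|\tilde\psi\rangle|^2>1-\delta$. *)

(* Defs.v *)
From Stdlib Require Import Reals List Factorial.
From Coquelicot Require Import Coquelicot.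
Open Scope R_scope.

(* A single-mode vector, given by its Fock-basis amplitudes <n|v>. *)
Definition state := nat -> C.

Definition cis (t : R) : C := (cos t, sin t).

Definition coherent (alpha : C) : state :=
  fun n => Cmult (RtoC (exp (- (Cmod alpha)^2 / 2)))
                 (Cdiv (Cpow alpha n) (RtoC (sqrt (INR (fact n))))).

Definition inner (u v : state) : C :=
  (Series (fun n => fst (Cmult (Cconj (u n)) (v n))),
   Series (fun n => snd (Cmult (Cconj (u n)) (v n)))).

Definition sqnorm (v : state) : R := Series (fun n => (Cmod (v n))^2).

Definition fidelity (u v : state) : R := (Cmod (inner u v))^2.

(* csum k f = f 0 + ... + f (k-1) *)
Definition csum (k : nat) (f : nat -> C) : C :=
  fold_right Cplus (RtoC 0) (map f (seq 0 k)).

Definition coherent_rank_le (k : nat) (v : state) : Prop :=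
  exists (c alpha : nat -> C),
    forall n, v n = csum k (fun i => Cmult (c i) (coherent (alpha i) n)).

Definition approx_coherent_rank_le (k : nat) (psi : state) : Prop :=
  forall delta : R, 0 < delta ->
    exists v : state, coherent_rank_le k v /\ sqnorm v = 1 /\
                      fidelity psi v > 1 - delta.

Definition omega (N k : nat) : C := cis (2 * PI * INR k / INR (S N)).

Definition coef (N : nat) (a : nat -> C) (eps : R) (k : nat) : C :=
  Cmult (RtoC (exp (eps^2 / 2) / INR (S N)))
    (sum_n (fun n => Cmult (RtoC (sqrt (INR (fact n)) / eps ^ n))
                        (Cmult (a n) (cis (- (2 * PI * INR n * INR k / INR (S N))))))
       N).

Definition phi_un (N : nat) (a : nat -> C) (eps : R) : state :=
  fun m => sum_n (fun k => Cmult (coef N a eps k)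
                              (coherent (Cmult (RtoC eps) (omega N k)) m)) N.

Definition calN (N : nat) (a : nat -> C) (eps : R) : R := sqnorm (phi_un N a eps).

Definition psi_tilde (N : nat) (a : nat -> C) (eps : R) : state :=
  fun m => Cmult (RtoC (/ sqrt (calN N a eps))) (phi_un N a eps m).

(* Main.v *)
Require Import Defs.
From Stdlib Require Import Reals Factorial Lra Lia Psatz Arith List.
From Coquelicot Require Import Coquelicot.
Open Scope R_scope.

Ltac toC := match goal with |- ?x = ?y => change (@eq C x y) end.

Lemma Ceq (x y : C) : fst x = fst y -> snd x = snd y -> x = y.
Proof. destruct x, y; simpl; intros; subst; auto. Qed.

Lemma cis_add a b : Cmult (cis a) (cis b) = cis (a + b).
Proof. unfold cis; apply Ceq; simpl; rewrite ?cos_plus, ?sin_plus; ring. Qed.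

Lemma cis_0 : cis 0 = RtoC 1.
Proof. unfold cis; rewrite cos_0, sin_0; reflexivity. Qed.

Lemma cis_pow t m : Cpow (cis t) m = cis (INR m * t).
Proof.
  induction m.
  - simpl. replace (0 * t) with 0 by ring. now rewrite cis_0.
  - rewrite Cpow_S, IHm, cis_add, S_INR. f_equal. ring.
Qed.

Lemma cis_period t q : cis (t + 2 * INR q * PI) = cis t.
Proof. unfold cis; now rewrite cos_period, sin_period. Qed.

Lemma Cmod_cis t : Cmod (cis t) = 1.
Proof.
  unfold Cmod, cis; simpl.
  replace (cos t * (cos t * 1) + sin t * (sin t * 1)) with 1. apply sqrt_1.
  pose proof (sin2_cos2 t) as H; unfold Rsqr in H; nra.
Qed.

Lemma sumC_mult_l (c : C) (u : nat -> C) n :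
  sum_n (fun k => Cmult c (u k)) n = Cmult c (sum_n u n).
Proof.
  induction n.
  - now rewrite !sum_O.
  - rewrite !sum_Sn, IHn. change plus with Cplus. simpl. ring.
Qed.

Lemma sumC_geom (w : C) N :
  Cmult (Cminus (RtoC 1) w) (sum_n (fun k => Cpow w k) N) = Cminus (RtoC 1) (Cpow w (S N)).
Proof.
  induction N.
  - rewrite sum_O. simpl. ring.
  - rewrite sum_Sn. change plus with Cplus.
    transitivity (Cplus (Cmult (Cminus (RtoC 1) w) (sum_n (fun k => Cpow w k) N))
                    (Cmult (Cminus (RtoC 1) w) (Cpow w (S N)))). simpl. ring.
    rewrite IHN. simpl. ring.
Qed.

Lemma sumC_const1 N : sum_n (fun _ : nat => RtoC 1) N = RtoC (INR (S N)).
Proof.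
  induction N.
  - rewrite sum_O. simpl. reflexivity.
  - rewrite sum_Sn, IHN. change plus with Cplus. rewrite <- RtoC_plus. f_equal.

Qed.

Lemma cis_nat_2pi j : cis (2 * PI * INR j) = RtoC 1.
Proof.
  rewrite <- cis_0. replace (2 * PI * INR j) with (0 + 2 * INR j * PI) by ring.
  apply cis_period.
Qed.

Lemma cis_ne1 r : 0 < Rabs r < 1 -> cis (2 * PI * r) <> RtoC 1.
Proof.
  intros [H1 H2] E.
  assert (Hc : cos (2 * PI * r) = 1) by (apply (f_equal fst) in E; exact E).
  replace (2 * PI * r) with (2 * (PI * r)) in Hc by ring.
  rewrite cos_2a_sin in Hc.
  assert (Hs : sin (PI * r) = 0) by nra.
  pose proof PI_RGT_0.
  destruct (Rle_or_lt 0 r).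
  - rewrite Rabs_right in H1, H2 by lra.
    assert (0 < sin (PI * r)) by (apply sin_gt_0; nra). lra.
  - rewrite Rabs_left in H1, H2 by lra.
    assert (0 < sin (PI * (- r))) by (apply sin_gt_0; nra).
    replace (PI * - r) with (- (PI * r)) in H3 by ring. rewrite sin_neg in H3. lra.
Qed.

Lemma roots N j n : (j <= N)%nat -> (n <= N)%nat ->
  sum_n (fun k => cis (2 * PI * INR k * (INR j - INR n) / INR (S N))) N =
  if Nat.eq_dec j n then RtoC (INR (S N)) else RtoC 0.
Proof.
  intros Hj Hn.
  assert (HS : 0 < INR (S N)) by (apply lt_0_INR; lia).
  destruct (Nat.eq_dec j n) as [<-|Hne].
  - rewrite <- sumC_const1. apply sum_n_ext. intros k.
    rewrite <- cis_0. f_equal. field. lra.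
  - set (r := (INR j - INR n) / INR (S N)).
    set (w := cis (2 * PI * r)).
    assert (Hw : forall k, cis (2 * PI * INR k * (INR j - INR n) / INR (S N)) = Cpow w k).
    { intros k. unfold w. rewrite cis_pow. f_equal. unfold r. field. lra. }
    rewrite (sum_n_ext _ _ _ Hw).
    assert (HwN : Cpow w (S N) = RtoC 1).
    { unfold w. rewrite cis_pow.
      replace (INR (S N) * (2 * PI * r)) with (2 * PI * INR j - 2 * INR n * PI)
        by (unfold r; field; lra).
      rewrite <- (cis_period _ n).
      replace (2 * PI * INR j - 2 * INR n * PI + 2 * INR n * PI) with (2 * PI * INR j) by ring.
      apply cis_nat_2pi. }
    assert (Hne1 : w <> RtoC 1).
    { apply cis_ne1. unfold r.
      assert (INR j <> INR n) by (intro; apply Hne; apply INR_eq; auto).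
      assert (INR j <= INR N) by (apply le_INR; auto).
      assert (INR n <= INR N) by (apply le_INR; auto).
      assert (0 <= INR j) by apply pos_INR. assert (0 <= INR n) by apply pos_INR.
      rewrite S_INR in *. rewrite Rabs_div by lra. rewrite (Rabs_right (INR N + 1)) by lra.
      split.
      + apply Rdiv_lt_0_compat; [apply Rabs_pos_lt; lra | lra].
      + apply Rlt_div_l. lra. rewrite Rmult_1_l. apply Rabs_def1; lra. }
    pose proof (sumC_geom w N) as G. rewrite HwN in G.
    replace (Cminus (RtoC 1) (RtoC 1)) with (RtoC 0) in G by (simpl; ring).
    assert (Hd : Cminus (RtoC 1) w <> RtoC 0).
    { intro D. apply Hne1. 
      replace w with (Cminus (RtoC 1) (Cminus (RtoC 1) w)) by ring. rewrite D. ring. }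
    change (sum_n (Cpow w) N) with (sum_n (fun k => Cpow w k) N).
    revert G. generalize (sum_n (fun k => Cpow w k) N). intros S G.
    replace S with (Cdiv (Cmult (Cminus (RtoC 1) w) S) (Cminus (RtoC 1) w)).
    2:{ field. auto. }
    rewrite G. unfold Cdiv. apply Cmult_0_l.
Qed.

Lemma sqrt_fact_pos m : 0 < sqrt (INR (fact m)).
Proof. apply sqrt_lt_R0, INR_fact_lt_0. Qed.

Lemma coherent_eps eps N k m :
  coherent (Cmult (RtoC eps) (omega N k)) m =
  Cmult (RtoC (exp (- eps ^ 2 / 2) * eps ^ m / sqrt (INR (fact m))))
        (cis (INR m * (2 * PI * INR k / INR (S N)))).
Proof.
  unfold coherent, omega.
  rewrite Cmod_mult, Cmod_R, Cmod_cis, Rmult_1_r, pow2_abs.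
  rewrite Cpow_mult_l, <- RtoC_pow, cis_pow.
  pose proof (sqrt_fact_pos m) as Hs.
  rewrite RtoC_div by lra. rewrite !RtoC_mult.
  field. intro H. apply RtoC_inj in H. lra.
Qed.

Lemma sumC_mult_r (c : C) (u : nat -> C) n :
  sum_n (fun k => Cmult (u k) c) n = Cmult (sum_n u n) c.
Proof.
  induction n.
  - now rewrite !sum_O.
  - rewrite !sum_Sn, IHn. change plus with Cplus. simpl. ring.
Qed.

Lemma sum_delta (f : nat -> C) (c : C) j N :
  sum_n (fun n => Cmult (f n) (if Nat.eq_dec j n then c else RtoC 0)) N =
  if Nat.leb j N then Cmult (f j) c else RtoC 0.
Proof.
  induction N.
  - rewrite sum_O. destruct (Nat.eq_dec j 0); subst; simpl; auto.
    destruct j; [lia|]. simpl. ring.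
  - rewrite sum_Sn, IHN. change plus with Cplus.
    destruct (Nat.eq_dec j (S N)).
    + subst. replace (Nat.leb (S N) N) with false by (symmetry; apply Nat.leb_gt; lia).
      rewrite Nat.leb_refl. simpl. ring.
    + destruct (Nat.leb j N) eqn:E1.
      * apply Nat.leb_le in E1. replace (Nat.leb j (S N)) with true by (symmetry; apply Nat.leb_le; lia).
        simpl. ring.
      * apply Nat.leb_gt in E1. replace (Nat.leb j (S N)) with false by (symmetry; apply Nat.leb_gt; lia).
        simpl. ring.
Qed.

Lemma phi_un_eq N a eps m : eps <> 0 ->
  phi_un N a eps m =
  Cmult (RtoC (eps ^ m / sqrt (INR (fact m)) *
               (sqrt (INR (fact (m mod S N))) / eps ^ (m mod S N))))
        (a (m mod S N)).
Proof.
  intros He.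
  set (j := m mod S N). set (q := (m / S N)%nat).
  assert (Hm : (m = j + q * S N)%nat) by (unfold j, q; pose proof (Nat.div_mod_eq m (S N)); lia).
  assert (Hj : (j < S N)%nat) by (unfold j; apply Nat.mod_upper_bound; lia).
  assert (HS : 0 < INR (S N)) by (apply lt_0_INR; lia).
  set (K := exp (eps ^ 2 / 2) / INR (S N) * (exp (- eps ^ 2 / 2) * eps ^ m / sqrt (INR (fact m)))).
  set (A := fun n => Cmult (RtoC (sqrt (INR (fact n)) / eps ^ n)) (a n)).
  unfold phi_un.
  transitivity (sum_n (fun k => Cmult (RtoC K)
     (sum_n (fun n => Cmult (A n) (cis (2 * PI * INR k * (INR j - INR n) / INR (S N)))) N)) N).
  { apply sum_n_ext. intros k. rewrite coherent_eps. unfold coef.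
    rewrite (sum_n_ext (fun n => Cmult (A n) (cis (2 * PI * INR k * (INR j - INR n) / INR (S N))))
      (fun n => Cmult (Cmult (RtoC (sqrt (INR (fact n)) / eps ^ n))
           (Cmult (a n) (cis (- (2 * PI * INR n * INR k / INR (S N))))))
           (cis (INR m * (2 * PI * INR k / INR (S N)))))).
    2:{ intros n. unfold A. rewrite <- (cis_period _ (k * q)).
        replace (2 * PI * INR k * (INR j - INR n) / INR (S N) + 2 * INR (k * q) * PI) with
          (- (2 * PI * INR n * INR k / INR (S N)) + INR m * (2 * PI * INR k / INR (S N))).
        - rewrite <- cis_add. toC. ring.
        - rewrite Hm, plus_INR, !mult_INR. field. lra. }
    rewrite sumC_mult_r.
    generalize (sum_n (fun n => Cmult (RtoC (sqrt (INR (fact n)) / eps ^ n))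
           (Cmult (a n) (cis (- (2 * PI * INR n * INR k / INR (S N)))))) N).
    intros S. unfold K. rewrite !RtoC_mult. toC. ring. }
  rewrite sumC_mult_l.
  rewrite (sum_n_switch (fun k n => Cmult (A n) (cis (2 * PI * INR k * (INR j - INR n) / INR (S N))))).
  rewrite (sum_n_ext_loc _ (fun n => Cmult (A n) (if Nat.eq_dec j n then RtoC (INR (S N)) else RtoC 0))).
  2:{ intros n Hn. rewrite sumC_mult_l, roots by lia. reflexivity. }
  rewrite sum_delta. replace (Nat.leb j N) with true by (symmetry; apply Nat.leb_le; lia).
  unfold A.
  toC. replace (Cmult (RtoC K) (Cmult (Cmult (RtoC (sqrt (INR (fact j)) / eps ^ j)) (a j)) (RtoC (INR (S N)))))
    with (Cmult (RtoC (K * (sqrt (INR (fact j)) / eps ^ j) * INR (S N))) (a j)).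
  2:{ rewrite !RtoC_mult. ring. }
  f_equal. f_equal. unfold K.
  replace (- eps ^ 2 / 2) with (- (eps ^ 2 / 2)) by field. rewrite exp_Ropp.
  assert (exp (eps ^ 2 / 2) <> 0) by (apply Rgt_not_eq, exp_pos).
  pose proof (sqrt_fact_pos m). pose proof (pow_nonzero eps j He).
  field. repeat split; lra.
Qed.

Lemma sum_n_stable (f : nat -> R) N n : (N <= n)%nat -> (forall k, (N < k)%nat -> f k = 0) ->
  sum_n f n = sum_n f N.
Proof.
  intros H Hf. induction H; auto.
  rewrite sum_Sn, IHle, Hf by lia. apply Rplus_0_r.
Qed.

Lemma is_series_finite (f : nat -> R) N : (forall k, (N < k)%nat -> f k = 0) ->
  is_series f (sum_n f N).
Proof.
  intros Hf. unfold is_series.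
  apply filterlim_ext_loc with (fun _ => sum_n f N).
  - exists N. intros n Hn. symmetry. apply sum_n_stable; auto.
  - apply filterlim_const.
Qed.

Lemma Series_finite (f : nat -> R) N : (forall k, (N < k)%nat -> f k = 0) ->
  Series f = sum_n f N.
Proof. intros. apply is_series_unique, is_series_finite; auto. Qed.

Lemma Series_nonneg (f : nat -> R) : (forall n, 0 <= f n) -> ex_series f -> 0 <= Series f.
Proof.
  intros H E.
  assert (Z : Series (fun _ => 0) = 0).
  { rewrite (Series_finite _ 0) by auto. apply sum_O. }
  rewrite <- Z. apply Series_le; auto. intros; split; [lra|auto].
Qed.

Lemma fact_mul_le a b : (fact a * fact b <= fact (a + b))%nat.
Proof.
  induction a; simpl. lia.
  pose proof (lt_O_fact b). nia.
Qed.

Lemma g_eq N a eps m : eps <> 0 ->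
  Cmod (phi_un N a eps m) ^ 2 =
  (eps ^ m) ^ 2 / INR (fact m) * (INR (fact (m mod S N)) / (eps ^ (m mod S N)) ^ 2) *
  Cmod (a (m mod S N)) ^ 2.
Proof.
  intros He. rewrite phi_un_eq by auto.
  rewrite Cmod_mult, Cmod_R, Rpow_mult_distr, pow2_abs.
  set (j := (m mod S N)%nat).
  pose proof (sqrt_fact_pos m). pose proof (sqrt_fact_pos j).
  pose proof (pow_nonzero eps j He).
  rewrite <- (pow2_sqrt (INR (fact m))) at 2 by (apply pos_INR).
  rewrite <- (pow2_sqrt (INR (fact j))) at 2 by (apply pos_INR).
  f_equal. field. split; lra.
Qed.

Lemma term_le_sum (f : nat -> R) N j : (forall n, 0 <= f n) -> (j <= N)%nat -> f j <= sum_n f N.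
Proof.
  intros Hf Hj. induction N.
  - replace j with 0%nat by lia. rewrite sum_O. lra.
  - rewrite sum_Sn. change plus with Rplus.
    destruct (Nat.eq_dec j (S N)) as [->|Hne].
    + assert (0 <= sum_n f N).
      { induction N. rewrite sum_O. auto. rewrite sum_Sn. change plus with Rplus.
        specialize (Hf (S N)). apply Rplus_le_le_0_compat; auto. apply IHN0; lia. }
      lra.
    + specialize (IHN ltac:(lia)). specialize (Hf (S N)). lra.
Qed.

Lemma ex_series_exp2 (x : R) : ex_series (fun m => x ^ m / INR (fact m)).
Proof.
  exists (exp x). pose proof (is_exp_Reals x) as H. unfold is_pseries in H.
  eapply is_series_ext; [|exact H]. intros n. simpl. rewrite pow_n_pow. reflexivity.
Qed.

Lemma pow_sq eps m : (eps ^ m) ^ 2 = (eps ^ 2) ^ m.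
Proof. rewrite <- !pow_mult. f_equal. lia. Qed.

Lemma sumR_mult_l (c : R) (u : nat -> R) n :
  sum_n (fun k => c * u k) n = c * sum_n u n.
Proof.
  induction n.
  - now rewrite !sum_O.
  - rewrite !sum_Sn, IHn. change plus with Rplus. simpl. ring.
Qed.

Section G.
Variable N : nat.
Variable a : nat -> C.
Hypothesis hsupp : forall n, (N < n)%nat -> a n = 0.
Hypothesis hnorm : sum_n (fun n => (Cmod (a n))^2) N = 1.

Definition g eps m := Cmod (phi_un N a eps m) ^ 2.

Lemma a_le1 j : (j <= N)%nat -> Cmod (a j) ^ 2 <= 1.
Proof.
  intros Hj. rewrite <- hnorm. apply (term_le_sum (fun n => Cmod (a n) ^ 2)); auto.
  intros n. apply pow2_ge_0.
Qed.

Lemma g_nonneg eps m : 0 <= g eps m.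
Proof. apply pow2_ge_0. Qed.

Lemma g_small eps m : eps <> 0 -> (m <= N)%nat -> g eps m = Cmod (a m) ^ 2.
Proof.
  intros He Hm. unfold g. rewrite g_eq by auto.
  rewrite Nat.mod_small by lia.
  pose proof (INR_fact_lt_0 m). pose proof (pow_nonzero eps m He).
  field. split; lra.
Qed.

Lemma ex_g eps : eps <> 0 -> ex_series (g eps).
Proof.
  intros He.
  set (Kc := sum_n (fun j => INR (fact j) / (eps ^ j) ^ 2) N).
  apply (@ex_series_le R_AbsRing R_CompleteNormedModule _ (fun m => (eps ^ 2) ^ m / INR (fact m) * Kc)).
  - intros m. change norm with Rabs. rewrite Rabs_pos_eq by apply g_nonneg.
    unfold g. rewrite g_eq by auto.
    set (j := (m mod S N)%nat).
    assert (Hj : (j <= N)%nat) by (unfold j; pose proof (Nat.mod_upper_bound m (S N)); lia).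
    rewrite pow_sq.
    assert (0 <= (eps ^ 2) ^ m / INR (fact m)).
    { apply Rmult_le_pos. apply pow_le, pow2_ge_0. apply Rlt_le, Rinv_0_lt_compat, INR_fact_lt_0. }
    assert (0 <= INR (fact j) / (eps ^ j) ^ 2).
    { apply Rmult_le_pos. apply pos_INR. apply Rlt_le, Rinv_0_lt_compat.
      pose proof (pow_nonzero eps j He). apply pow2_gt_0 in H0. auto. }
    assert (INR (fact j) / (eps ^ j) ^ 2 <= Kc).
    { unfold Kc. apply (term_le_sum (fun j => INR (fact j) / (eps ^ j) ^ 2)); auto.
      intros n. apply Rmult_le_pos. apply pos_INR. apply Rlt_le, Rinv_0_lt_compat.
      apply pow2_gt_0, pow_nonzero, He. }
    pose proof (a_le1 j Hj). pose proof (pow2_ge_0 (Cmod (a j))).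
    rewrite Rmult_assoc. apply Rmult_le_compat_l; auto. nra.
  - apply ex_series_scal_r, ex_series_exp2.
Qed.

Lemma calN_eq eps : eps <> 0 ->
  calN N a eps = 1 + Series (fun k => g eps (S N + k)).
Proof.
  intros He. unfold calN, sqnorm. fold (g eps).
  rewrite (Series_incr_n (g eps) (S N)) by (lia || apply ex_g; auto).
  simpl Init.Nat.pred. rewrite <- sum_n_Reals. f_equal.
  rewrite <- hnorm. apply sum_n_ext_loc. intros n Hn. apply g_small; auto.
Qed.

Lemma tail_nonneg eps : eps <> 0 -> 0 <= Series (fun k => g eps (S N + k)).
Proof.
  intros He. apply Series_nonneg. intros; apply g_nonneg.
  apply (ex_series_incr_n (g eps) (S N)). apply ex_g; auto.
Qed.

Lemma calN_ge1 eps : eps <> 0 -> 1 <= calN N a eps.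
Proof. intros He. rewrite calN_eq by auto. pose proof (tail_nonneg eps He). lra. Qed.
Lemma tail_term eps k : eps <> 0 -> Rabs eps < 1/2 ->
  g eps (S N + k) <= eps ^ (2 * S N) / INR (fact (S N)) * 4 ^ N * (/ 4) ^ k.
Proof.
  intros He Hs.
  set (m := (S N + k)%nat). set (j := (m mod S N)%nat). set (q := (m / S N)%nat).
  assert (Hm : (m = j + q * S N)%nat) by (unfold j, q; pose proof (Nat.div_mod_eq m (S N)); lia).
  assert (Hjlt : (j < S N)%nat) by (unfold j; apply Nat.mod_upper_bound; lia).
  assert (Hq : (1 <= q)%nat).
  { destruct q. simpl in Hm. unfold m in Hm. lia. lia. }
  set (p := (q - 1)%nat).
  assert (Hm' : (m = j + (S N + p * S N))%nat) by (unfold p; nia).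
  unfold g. rewrite g_eq by auto. fold m j.
  rewrite !pow_sq. set (x := eps ^ 2).
  assert (Hx0 : 0 <= x) by (apply pow2_ge_0).
  assert (Hx : x <= / 4).
  { unfold x. rewrite <- pow2_abs. pose proof (Rabs_pos eps). nra. }
  assert (Hxj : 0 < x ^ j) by (unfold x; rewrite <- pow_sq; apply pow2_gt_0, pow_nonzero, He).
  pose proof (INR_fact_lt_0 m) as Fm. pose proof (INR_fact_lt_0 j) as Fj.
  pose proof (INR_fact_lt_0 (S N)) as Fs.
  replace (x ^ m) with (x ^ j * x ^ (S N) * x ^ (p * S N))
    by (rewrite <- !pow_add; f_equal; lia).
  replace (x ^ j * x ^ S N * x ^ (p * S N) / INR (fact m) * (INR (fact j) / x ^ j) * Cmod (a j) ^ 2)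
    with (x ^ S N * x ^ (p * S N) * (INR (fact j) / INR (fact m)) * Cmod (a j) ^ 2)
    by (field; split; lra).
  replace (eps ^ (2 * S N) / INR (fact (S N)) * 4 ^ N * (/ 4) ^ k)
    with (x ^ S N * (4 ^ N * (/ 4) ^ k) * (/ INR (fact (S N))) * 1)
    by (unfold x; rewrite <- pow_mult; field; lra).
  assert (B2 : x ^ (p * S N) <= 4 ^ N * (/ 4) ^ k).
  { apply Rle_trans with ((/ 4) ^ (p * S N)). apply pow_incr; lra.
    rewrite !pow_inv.
    assert (0 < 4 ^ k) by (apply pow_lt; lra).
    assert (0 < 4 ^ (p * S N)) by (apply pow_lt; lra).
    assert (4 ^ k <= 4 ^ (N + p * S N)) by (apply Rle_pow; [lra | unfold m in Hm'; lia]).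
    rewrite pow_add in H1.
    apply Rle_trans with (4 ^ N * / (4 ^ N * 4 ^ (p * S N))).
    - right. field. split; apply Rgt_not_eq; try lra. apply pow_lt; lra.
    - apply Rmult_le_compat_l. apply pow_le; lra.
      apply Rinv_le_contravar; auto. }
  assert (B3 : INR (fact j) / INR (fact m) <= / INR (fact (S N))).
  { assert (Hf : (fact j * fact (S N) <= fact m)%nat).
    { rewrite Hm'. eapply Nat.le_trans; [|apply fact_mul_le].
      apply Nat.mul_le_mono_l, fact_le. lia. }
    apply le_INR in Hf. rewrite mult_INR in Hf.
    apply Rle_trans with (INR (fact j) * INR (fact (S N)) / (INR (fact m) * INR (fact (S N)))).
    - right. field. split; lra.
    - apply Rle_trans with (INR (fact m) / (INR (fact m) * INR (fact (S N)))).
      + unfold Rdiv. apply Rmult_le_compat_r; auto.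
        apply Rlt_le, Rinv_0_lt_compat. nra.
      + right. field. split; lra. }
  assert (B4 : Cmod (a j) ^ 2 <= 1) by (apply a_le1; lia).
  assert (0 <= x ^ (p * S N)) by (apply pow_le; auto).
  assert (0 <= x ^ S N) by (apply pow_le; auto).
  assert (0 <= INR (fact j) / INR (fact m)).
  { apply Rmult_le_pos. lra. apply Rlt_le, Rinv_0_lt_compat. lra. }
  apply Rmult_le_compat; [ | apply pow2_ge_0 | | exact B4].
  - apply Rmult_le_pos; [apply Rmult_le_pos; auto | auto].
  - apply Rmult_le_compat; [apply Rmult_le_pos; auto | auto | | exact B3].
    apply Rmult_le_compat_l; auto.
Qed.
Lemma calN_bound eps : eps <> 0 -> Rabs eps < 1/2 ->
  calN N a eps - 1 <= 4 ^ S N * (eps ^ (2 * S N) / INR (fact (S N))).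
Proof.
  intros He Hs. rewrite calN_eq by auto.
  set (T := eps ^ (2 * S N) / INR (fact (S N)) * 4 ^ N).
  assert (HT : 0 <= T).
  { unfold T. apply Rmult_le_pos; [|apply pow_le; lra].
    apply Rmult_le_pos. rewrite pow_mult. apply pow_le, pow2_ge_0.
    apply Rlt_le, Rinv_0_lt_compat, INR_fact_lt_0. }
  assert (G : is_series (fun k => (/ 4) ^ k) (/ (1 - / 4))).
  { apply is_series_geom. rewrite Rabs_pos_eq; lra. }
  assert (Eb : ex_series (fun k => T * (/ 4) ^ k)).
  { apply (ex_series_scal_l T (fun k => (/ 4) ^ k)). eexists; exact G. }
  assert (L : Series (fun k => g eps (S N + k)) <= Series (fun k => T * (/ 4) ^ k)).
  { apply Series_le; auto. intros k. split. apply g_nonneg. apply tail_term; auto. }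
  assert (ES : Series (fun k => T * (/ 4) ^ k) = T * / (1 - / 4)).
  { rewrite Series_scal_l. f_equal. apply is_series_unique. exact G. }
  rewrite ES in L.
  replace (4 ^ S N * (eps ^ (2 * S N) / INR (fact (S N)))) with (4 * T) by (unfold T; simpl; ring).
  assert (T * / (1 - / 4) <= 4 * T).
  { replace (/ (1 - / 4)) with (4 / 3) by field. nra. }
  lra.
Qed.
Lemma phi_small eps m : eps <> 0 -> (m <= N)%nat -> phi_un N a eps m = a m.
Proof.
  intros He Hm. rewrite phi_un_eq by auto. rewrite Nat.mod_small by lia.
  pose proof (sqrt_fact_pos m). pose proof (pow_nonzero eps m He).
  replace (eps ^ m / sqrt (INR (fact m)) * (sqrt (INR (fact m)) / eps ^ m)) with 1
    by (field; split; lra).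
  apply Cmult_1_l.
Qed.

Lemma sqrt_calN_pos eps : eps <> 0 -> 0 < sqrt (calN N a eps).
Proof. intros He. apply sqrt_lt_R0. pose proof (calN_ge1 eps He). lra. Qed.

Lemma fidelity_eq eps : eps <> 0 -> fidelity a (psi_tilde N a eps) = / calN N a eps.
Proof.
  intros He. set (c := / sqrt (calN N a eps)).
  assert (Hterm : forall m, Cmult (Cconj (a m)) (psi_tilde N a eps m) =
     if Nat.leb m N then RtoC (c * Cmod (a m) ^ 2) else RtoC 0).
  { intros m. unfold psi_tilde. fold c. destruct (Nat.leb m N) eqn:E.
    - apply Nat.leb_le in E. rewrite phi_small by auto.
      rewrite RtoC_mult, Cmod2_conj. toC. ring.

    - apply Nat.leb_gt in E. rewrite hsupp by auto. apply Ceq; simpl; ring. }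
  unfold fidelity, inner.
  rewrite (Series_finite _ N), (Series_finite (fun n => snd _) N).
  2:{ intros k Hk. rewrite Hterm. replace (Nat.leb k N) with false by (symmetry; apply Nat.leb_gt; lia). reflexivity. }
  2:{ intros k Hk. rewrite Hterm. replace (Nat.leb k N) with false by (symmetry; apply Nat.leb_gt; lia). reflexivity. }
  rewrite (sum_n_ext_loc _ (fun n => c * Cmod (a n) ^ 2)).
  2:{ intros n Hn. rewrite Hterm. replace (Nat.leb n N) with true by (symmetry; apply Nat.leb_le; lia). reflexivity. }
  rewrite (sum_n_ext_loc (fun n => snd _) (fun n => 0)).
  2:{ intros n Hn. rewrite Hterm. replace (Nat.leb n N) with true by (symmetry; apply Nat.leb_le; lia). reflexivity. }
  rewrite sumR_mult_l, hnorm.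
  replace (sum_n (fun _ : nat => 0) N) with 0.
  2:{ rewrite sum_n_const. ring. }
  change (c * 1, 0) with (RtoC (c * 1)). rewrite Cmod_R, pow2_abs, Rmult_1_r.
  unfold c. rewrite pow_inv, pow2_sqrt. reflexivity. pose proof (calN_ge1 eps He). lra.
Qed.

Lemma sqnorm_psi eps : eps <> 0 -> sqnorm (psi_tilde N a eps) = 1.
Proof.
  intros He. unfold sqnorm, psi_tilde.
  rewrite (Series_ext _ (fun m => (/ sqrt (calN N a eps)) ^ 2 * g eps m)).
  2:{ intros m. unfold g. rewrite Cmod_mult, Cmod_R, Rpow_mult_distr, pow2_abs. reflexivity. }
  rewrite Series_scal_l. fold (g eps). change (Series (g eps)) with (calN N a eps).
  pose proof (calN_ge1 eps He).
  rewrite pow_inv, pow2_sqrt by lra. field. lra.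
Qed.
End G.

Lemma fold_Cplus l b : fold_right Cplus b l = Cplus (fold_right Cplus (RtoC 0) l) b.
Proof. induction l; simpl. ring. rewrite IHl. ring. Qed.

Lemma csum_sum_n (f : nat -> C) N : csum (S N) f = sum_n f N.
Proof.
  unfold csum. induction N.
  - simpl. rewrite sum_O. ring.
  - rewrite seq_S, map_app, fold_right_app, sum_Sn, <- IHN. simpl.
    rewrite (fold_Cplus _ (Cplus (f (S N)) (RtoC 0))). change plus with Cplus. simpl. ring.
Qed.

Lemma pow_le_self x n : 0 <= x <= 1 -> (1 <= n)%nat -> x ^ n <= x.
Proof.
  intros Hx Hn. induction Hn. simpl. lra.
  simpl. assert (0 <= x ^ m) by (apply pow_le; lra). nra.
Qed.

Section H.
Variable N : nat.
Variable a : nat -> C.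
Hypothesis hsupp : forall n, (N < n)%nat -> a n = 0.
Hypothesis hnorm : sum_n (fun n => (Cmod (a n))^2) N = 1.

Lemma part4 delta : 0 < delta -> exists eta : R, 0 < eta /\
        forall eps : R, eps <> 0 -> Rabs eps < eta ->
          fidelity a (psi_tilde N a eps) > 1 - delta.
Proof.
  intros Hd. set (M := 4 ^ S N).
  assert (HM : 0 < M) by (apply pow_lt; lra).
  exists (Rmin (1/2) (delta / M)). split.
  { apply Rmin_pos. lra. apply Rdiv_lt_0_compat; lra. }
  intros eps He Hs.
  assert (Hs1 : Rabs eps < 1/2) by (eapply Rlt_le_trans; [exact Hs|apply Rmin_l]).
  assert (Hs2 : Rabs eps < delta / M) by (eapply Rlt_le_trans; [exact Hs|apply Rmin_r]).
  rewrite fidelity_eq by auto.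
  pose proof (calN_ge1 N a hnorm eps He) as G1.
  pose proof (calN_bound N a hnorm eps He Hs1) as G2. change (4 ^ S N) with M in G2.
  set (t := M * (eps ^ (2 * S N) / INR (fact (S N)))) in *.
  assert (Ht : t <= M * Rabs eps).
  { unfold t. apply Rmult_le_compat_l. lra.
    rewrite pow_mult, <- (pow2_abs eps), <- pow_mult.
    pose proof (Rabs_pos eps).
    assert (Rabs eps ^ (2 * S N) <= Rabs eps) by (apply pow_le_self; [lra| lia]).
    pose proof (INR_fact_lt_0 (S N)).
    assert (1 <= INR (fact (S N))).
    { replace 1 with (INR 1) by reflexivity. apply le_INR. apply lt_O_fact. }
    assert (0 <= Rabs eps ^ (2 * S N)) by (apply pow_le; lra).
    apply Rle_trans with (Rabs eps ^ (2 * S N)); auto.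
    unfold Rdiv. rewrite <- (Rmult_1_r (Rabs eps ^ (2 * S N))) at 2.
    apply Rmult_le_compat_l; auto.
    rewrite <- Rinv_1. apply Rinv_le_contravar; lra. }
  assert (Ht2 : t < delta).
  { apply Rle_lt_trans with (M * Rabs eps); auto.
    apply Rmult_lt_compat_l with (r := M) in Hs2; auto.
    replace (M * (delta / M)) with delta in Hs2 by (field; lra). lra. }
  assert (Ht0 : 0 <= t) by lra.
  apply Rlt_gt.
  apply Rlt_le_trans with (/ (1 + t)).
  - apply (Rmult_lt_reg_r (1 + t)). lra.
    rewrite Rinv_l by lra. nra.
  - apply Rinv_le_contravar; lra.
Qed.

Lemma phi_rank eps : eps <> 0 -> coherent_rank_le (S N) (psi_tilde N a eps).
Proof.
  intros He.
  exists (fun i => Cmult (RtoC (/ sqrt (calN N a eps))) (coef N a eps i)).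
  exists (fun i => Cmult (RtoC eps) (omega N i)).
  intros n. rewrite csum_sum_n. unfold psi_tilde, phi_un.
  rewrite <- sumC_mult_l. apply sum_n_ext. intros k. toC. ring.
Qed.
End H.

Theorem theorem1 (N : nat) (a : nat -> C)
  (hsupp : forall n, (N < n)%nat -> a n = 0)
  (hnorm : sum_n (fun n => (Cmod (a n))^2) N = 1) :
  approx_coherent_rank_le (S N) a
  /\ (exists M delta : R, 0 < delta /\
        forall eps : R, eps <> 0 -> Rabs eps < delta ->
          Rabs (calN N a eps - 1) <= M * (eps ^ (2 * S N) / INR (fact (S N))))
  /\ (forall eps : R, eps <> 0 -> fidelity a (psi_tilde N a eps) = / calN N a eps)
  /\ (forall delta : R, 0 < delta -> exists eta : R, 0 < eta /\
        forall eps : R, eps <> 0 -> Rabs eps < eta ->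
          fidelity a (psi_tilde N a eps) > 1 - delta).
Proof.
  split; [|split; [|split]].
  - intros delta Hd. destruct (part4 N a hsupp hnorm delta Hd) as [eta [He H]].
    exists (psi_tilde N a (eta / 2)).
    assert (Hne : eta / 2 <> 0) by lra.
    split; [apply phi_rank; auto|split].
    + apply sqnorm_psi; auto.
    + apply H; auto. rewrite Rabs_pos_eq; lra.
  - exists (4 ^ S N), (1/2). split. lra.
    intros eps He Hs. pose proof (calN_ge1 N a hnorm eps He).
    rewrite Rabs_pos_eq by lra. apply calN_bound; auto.
  - intros eps He. apply fidelity_eq; auto.
  - apply part4; auto.
Qed.
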